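(* Let $G$, $P$, $w$ be as in the context, let $t\in V$, let $\mathcal F\subseteq V\setminus\{t\}$ be a set of failed nodes, and let $s\in V\setminus(\mathcal F\cup\{t\})$ be such that there is a directed path from $s$ to $t$ in $G$ avoiding $\mathcal F$. Let $L_{st}^{\overline{\mathcal F}}$ be the minimum total cost of a directed path from $s$ to $t$ in the graph obtained from $G$ by deleting the nodes of $\mathcal F$. Then $$\lim_{\alpha\to0^+}U_s^{\{t,\overline{\mathcal F\cup\{o\}}\}}(\alpha)=L_{st}^{\overline{\mathcal F}}.$$
   Context: $G=(V,E)$ is a finite directed graph; each edge $e_{ij}\in E$ has a positive cost $w_{ij}$; $P$ is a row-stochastic transition matrix with $P_{ij}>0$ iff $e_{ij}\in E$. Evaporating network $G_\alpha$ ($0<\alpha<1$): Markov chain on $V\cup\{o\}$ with $P_{ij}(\alpha)=P_{ij}\alpha^{w_{ij}}$ ($i,j\in V$), $P_{io}(\alpha)=1-\sum_jP_{ij}\alpha^{w_{ij}}$, $o$ absorbing. Avoidance hitting cost with avoided set $B$: make $t$, $o$ and all nodes of $B\subseteq V\setminus\{t\}$ absorbing in $G_\alpha$, let $\mathcal T=V\setminus(\{t\}\cup B)$, let $Q_x$ be the probability that the chain from $x$ is absorbed at $t$ (so $Q_t=1$, $Q_o=Q_b=0$ for $b\in B$), let $F(\alpha)=(I-P(\alpha)_{\mathcal T\mathcal T})^{-1}$, and set $U_s^{\{t,\overline{B\cup\{o\}}\}}(\alpha)=\sum_{m\in\mathcal T}F_{sm}(\alpha)\frac{Q_m}{Q_s}r_m$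 with $r_m=\sum_iP_{mi}(\alpha)w_{mi}Q_i/Q_m$ (terms with $Q_m=0$ omitted). This is the expected total cost of the walk from $s$ conditioned on being absorbed at $t$ (thus avoiding $B$ and $o$). *)

(* Defs.v *)
From Stdlib Require Import Reals Lra Lia List ClassicalEpsilon.
Import ListNotations.
Open Scope R_scope.

(* Nodes of V are the naturals 0..n-1; matrices are functions nat -> nat -> R. *)

Fixpoint sumR (n : nat) (f : nat -> R) : R :=
  match n with
  | O => 0
  | S k => sumR k f + f k
  end.

Definition Pev (P w : nat -> nat -> R) (alpha : R) (i j : nat) : R :=
  P i j * Rpower alpha (w i j).

Definition inT (n t : nat) (B : nat -> bool) (m : nat) : bool :=
  (Nat.ltb m n && negb (Nat.eqb m t) && negb (B m))%bool.

(* The n x n matrix equal to I - P(alpha)_{TT} on T x T and to the identity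
   outside T x T (block diagonal, so its inverse restricted to T x T is
   (I - P(alpha)_{TT})^{-1}). *)
Definition IminusPTT (n t : nat) (B : nat -> bool) (P w : nat -> nat -> R)
  (alpha : R) (i j : nat) : R :=
  (if Nat.eqb i j then 1 else 0) -
  (if (inT n t B i && inT n t B j)%bool then Pev P w alpha i j else 0).

Definition is_inverse (n : nat) (M F : nat -> nat -> R) : Prop :=
  forall i j, (i < n)%nat -> (j < n)%nat ->
    sumR n (fun k => M i k * F k j) = (if Nat.eqb i j then 1 else 0) /\
    sumR n (fun k => F i k * M k j) = (if Nat.eqb i j then 1 else 0).

(* The inverse matrix (chosen by Hilbert's epsilon; it is unique when it exists). *)
Definition inv_mat (n : nat) (M : nat -> nat -> R) : nat -> nat -> R :=
  epsilon (inhabits (fun _ _ => 0)) (is_inverse n M).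

Definition Fmat (n t : nat) (B : nat -> bool) (P w : nat -> nat -> R) (alpha : R)
  : nat -> nat -> R :=
  inv_mat n (IminusPTT n t B P w alpha).

(* Absorption probability at t: Q_t = 1, Q_x = 0 for x in B (and for o),
   Q_x = sum_{m in T} F_xm(alpha) P_mt(alpha) for x in T. *)
Definition Qabs (n t : nat) (B : nat -> bool) (P w : nat -> nat -> R) (alpha : R)
  (x : nat) : R :=
  if Nat.eqb x t then 1
  else if inT n t B x then
    sumR n (fun m => if inT n t B m
                     then Fmat n t B P w alpha x m * Pev P w alpha m t else 0)
  else 0.

Definition rcost (n t : nat) (B : nat -> bool) (P w : nat -> nat -> R) (alpha : R)
  (m : nat) : R :=
  sumR n (fun i => Pev P w alpha m i * w m i * Qabs n t B P w alpha i)
  / Qabs n t B P w alpha m.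

Definition Uavoid (n t : nat) (B : nat -> bool) (P w : nat -> nat -> R) (alpha : R)
  (s : nat) : R :=
  sumR n (fun m =>
    if inT n t B m then
      if Req_EM_T (Qabs n t B P w alpha m) 0 then 0
      else Fmat n t B P w alpha s m
           * (Qabs n t B P w alpha m / Qabs n t B P w alpha s)
           * rcost n t B P w alpha m
    else 0).

Fixpoint walk_to (E : nat -> nat -> Prop) (n : nat) (B : nat -> bool)
  (x : nat) (p : list nat) (t : nat) : Prop :=
  match p with
  | [] => x = t
  | y :: q => E x y /\ (y < n)%nat /\ B y = false /\ walk_to E n B y q t
  end.

Definition avoid_path (E : nat -> nat -> Prop) (n : nat) (B : nat -> bool)
  (s : nat) (p : list nat) (t : nat) : Prop :=
  NoDup (s :: p) /\ walk_to E n B s p t.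

Fixpoint path_cost (w : nat -> nat -> R) (x : nat) (p : list nat) : R :=
  match p with
  | [] => 0
  | y :: q => w x y + path_cost w y q
  end.

Definition is_min_path_cost (E : nat -> nat -> Prop) (n : nat) (B : nat -> bool)
  (w : nat -> nat -> R) (s t : nat) (L : R) : Prop :=
  (exists p, avoid_path E n B s p t /\ path_cost w s p = L) /\
  (forall p, avoid_path E n B s p t -> L <= path_cost w s p).

(* Main.v *)
Require Import Defs.
From Stdlib Require Import Reals Lra Lia List Classical ClassicalEpsilon.
From mathcomp Require all_boot all_algebra Rstruct.
Import ListNotations.
Open Scope R_scope.

Module MC.
Import all_boot all_algebra Rstruct.
Import GRing.Theory.
Local Open Scope ring_scope.

Lemma sumR_big (n : nat) (f : nat -> R) :
  sumR n f = (\sum_(i < n) f (nat_of_ord i))%R.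
Proof.
elim: n => [|n IH] /=; first by rewrite big_ord0.
by rewrite big_ord_recr /= IH.
Qed.

Lemma inv_exists (n : nat) (M : nat -> nat -> R) :
  (forall v : nat -> R, (forall i, (i < n)%coq_nat -> sumR n (fun k => M i k * v k) = 0) ->
     forall i, (i < n)%coq_nat -> v i = 0) ->
  exists F, is_inverse n M F.
Proof.
move=> Hinj.
case: n M Hinj => [|n] M Hinj.
  by exists (fun _ _ => 0) => i j Hi; lia.
set Mm : 'M[R]_n.+1 := \matrix_(i, j) M (nat_of_ord i) (nat_of_ord j).
have HU : Mm \in unitmx.
  rewrite -unitmx_tr -row_free_unit -kermx_eq0.
  apply/negPn/negP => /eqP Hnz.
  set K := kermx Mm^T in Hnz.
  have [i [j Hij]] : exists i j, K i j <> 0.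
    apply: Classical_Prop.NNPP => Hc; apply: Hnz; apply/matrixP => i j.
    rewrite [X in _ = X]mxE; apply: Classical_Prop.NNPP => Hn; apply: Hc; exists i; exists j; exact: Hn.
  have Hk : (row i K *m Mm^T == 0)%R by rewrite -sub_kermx row_sub.
  move/eqP: Hk => Hk.
  clearbody K.
  pose v := fun k : nat => K i (inord k).
  have Hv : forall a, (a < n.+1)%coq_nat -> sumR n.+1 (fun k => M a k * v k) = 0.
    move=> a Ha.
    move/matrixP: Hk => /(_ 0 (inord a)).
    rewrite !mxE sumR_big => H; apply: (etrans _ H).
    apply: eq_bigr => k _; rewrite !mxE /v inord_val.
    rewrite inordK; last by apply/ltP.
    by rewrite GRing.mulrC.
  apply: Hij.
  have := (Hinj v Hv) (nat_of_ord j) ltac:(apply/ltP; exact: ltn_ord).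
  by rewrite /v inord_val.
have H1 := mulmxV HU. have H2 := mulVmx HU.
set Fm := invmx Mm in H1 H2. clearbody Fm.
exists (fun i j => Fm (inord i) (inord j)) => i j Hi Hj.
have Hi' : (i <= n)%N by apply/leP; lia.
have Hj' : (j <= n)%N by apply/leP; lia.
split.
- move/matrixP: H1 => /(_ (inord i) (inord j)).
  rewrite !mxE sumR_big => Heq.
  transitivity ((inord i == inord j :> 'I_n.+1)%:R : R).
    rewrite -{}Heq.
    by apply: eq_bigr => k _; rewrite !mxE inord_val !inordK.
  rewrite -val_eqE /= !inordK //.
  by case: (Nat.eqb_spec i j) => [->|/eqP/negbTE->]; rewrite ?eqxx.
- move/matrixP: H2 => /(_ (inord i) (inord j)).
  rewrite !mxE sumR_big => Heq.
  transitivity ((inord i == inord j :> 'I_n.+1)%:R : R).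
    rewrite -{}Heq.
    by apply: eq_bigr => k _; rewrite !mxE inord_val !inordK.
  rewrite -val_eqE /= !inordK //.
  by case: (Nat.eqb_spec i j) => [->|/eqP/negbTE->]; rewrite ?eqxx.
Qed.
End MC.

Lemma sumR_ext n f g : (forall k, (k < n)%nat -> f k = g k) -> sumR n f = sumR n g.
Proof. induction n; simpl; intros H; auto. rewrite IHn by (intros; apply H; lia). rewrite H by lia. auto. Qed.

Lemma sumR_plus n f g : sumR n (fun k => f k + g k) = sumR n f + sumR n g.
Proof. induction n; simpl; [lra|]. rewrite IHn. lra. Qed.

Lemma sumR_scal n c f : sumR n (fun k => c * f k) = c * sumR n f.
Proof. induction n; simpl; [lra|]. rewrite IHn. lra. Qed.

Lemma sumR_minus n f g : sumR n (fun k => f k - g k) = sumR n f - sumR n g.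
Proof. induction n; simpl; [lra|]. rewrite IHn. lra. Qed.

Lemma sumR_zero n : sumR n (fun _ => 0) = 0.
Proof. induction n; simpl; [lra|]. rewrite IHn. lra. Qed.

Lemma sumR_le n f g : (forall k, (k < n)%nat -> f k <= g k) -> sumR n f <= sumR n g.
Proof. induction n; simpl; intros H; [lra|].
  assert (sumR n f <= sumR n g) by (apply IHn; intros; apply H; lia).
  assert (f n <= g n) by (apply H; lia). lra. Qed.

Lemma sumR_nonneg n f : (forall k, (k < n)%nat -> 0 <= f k) -> 0 <= sumR n f.
Proof. intros H. rewrite <- (sumR_zero n). apply sumR_le. auto. Qed.

Lemma sumR_lt n f g : (forall k, (k < n)%nat -> f k <= g k) ->
  (exists k, (k < n)%nat /\ f k < g k) -> sumR n f < sumR n g.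
Proof. induction n; simpl; intros H [k [Hk Hlt]]; [lia|].
  destruct (Nat.eq_dec k n) as [->|Hne].
  - assert (sumR n f <= sumR n g) by (apply sumR_le; intros; apply H; lia). lra.
  - assert (sumR n f < sumR n g) by (apply IHn; [intros; apply H; lia| exists k; split; [lia|auto]]).
    assert (f n <= g n) by (apply H; lia). lra. Qed.

Lemma sumR_ge_term n f j : (forall k, (k < n)%nat -> 0 <= f k) -> (j < n)%nat -> f j <= sumR n f.
Proof. induction n; simpl; intros H Hj; [lia|].
  destruct (Nat.eq_dec j n) as [->|Hne].
  - assert (0 <= sumR n f) by (apply sumR_nonneg; intros; apply H; lia). lra.
  - assert (f j <= sumR n f) by (apply IHn; [intros; apply H; lia| lia]).
    assert (0 <= f n) by (apply H; lia). lra. Qed.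

Lemma sumR_eq0 n f : (forall k, (k < n)%nat -> 0 <= f k) -> sumR n f = 0 ->
  forall k, (k < n)%nat -> f k = 0.
Proof. intros H Hs k Hk. assert (f k <= sumR n f) by (apply sumR_ge_term; auto).
  assert (0 <= f k) by auto. lra. Qed.

Lemma sumR_swap n m f : sumR n (fun i => sumR m (fun j => f i j)) =
  sumR m (fun j => sumR n (fun i => f i j)).
Proof. induction n; simpl.
  - rewrite sumR_zero. auto.
  - rewrite IHn. rewrite <- sumR_plus. auto. Qed.

Lemma sumR_delta n x g : (x < n)%nat ->
  sumR n (fun k => if Nat.eqb x k then g k else 0) = g x.
Proof. induction n; simpl; intros Hx; [lia|].
  destruct (Nat.eq_dec x n) as [->|Hne].
  - rewrite Nat.eqb_refl. rewrite (sumR_ext n _ (fun _ => 0)).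
    + rewrite sumR_zero; lra.
    + intros k Hk. destruct (Nat.eqb_spec n k); [lia|auto].
  - rewrite IHn by lia. destruct (Nat.eqb_spec x n); [lia|lra]. Qed.

Lemma sumR_pos_exists n f : (forall k, (k < n)%nat -> 0 <= f k) -> sumR n f = 1 ->
  exists k, (k < n)%nat /\ 0 < f k.
Proof. intros H Hs. destruct (classic (exists k, (k < n)%nat /\ 0 < f k)) as [?|Hn]; auto.
  exfalso. assert (sumR n f = 0).
  { rewrite (sumR_ext n _ (fun _ => 0)). apply sumR_zero.
    intros k Hk. assert (0 <= f k) by auto. destruct (Rle_lt_or_eq_dec _ _ H0); auto.
    exfalso; apply Hn; exists k; auto. }
  lra. Qed.

Lemma argmin_fin n (p : nat -> bool) (f : nat -> R) :
  (exists x, (x < n)%nat /\ p x = true) ->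
  exists x, (x < n)%nat /\ p x = true /\ forall y, (y < n)%nat -> p y = true -> f x <= f y.
Proof.
  induction n; intros [x [Hx Hp]]; [lia|].
  destruct (classic (exists x, (x < n)%nat /\ p x = true)) as [Hex|Hno].
  - destruct (IHn Hex) as [m [Hm [Hpm Hmin]]].
    destruct (p n) eqn:Hpn.
    + destruct (Rle_dec (f m) (f n)).
      * exists m; repeat split; auto. intros y Hy Hpy.
        destruct (Nat.eq_dec y n) as [->|]; auto. apply Hmin; auto; lia.
      * exists n; repeat split; auto. intros y Hy Hpy.
        destruct (Nat.eq_dec y n) as [->|]; [lra|]. assert (f m <= f y) by (apply Hmin; auto; lia). lra.
    + exists m; repeat split; auto. intros y Hy Hpy.
      destruct (Nat.eq_dec y n) as [->|]; [congruence|]. apply Hmin; auto; lia.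
  - exists n. assert (x = n).
    { destruct (Nat.eq_dec x n); auto. exfalso; apply Hno; exists x; split; auto; lia. }
    subst. repeat split; auto. intros y Hy Hpy.
    destruct (Nat.eq_dec y n) as [->|]; [lra|]. exfalso; apply Hno; exists y; split; auto; lia.
Qed.

Lemma Rpower_pos a x : 0 < Rpower a x.
Proof. unfold Rpower. apply exp_pos. Qed.

Lemma ln_neg a : 0 < a < 1 -> ln a < 0.
Proof. intros [H1 H2]. rewrite <- ln_1. apply ln_increasing; lra. Qed.

Lemma Rpower_le_exp a x y : 0 < a < 1 -> x <= y -> Rpower a y <= Rpower a x.
Proof. intros Ha Hxy. unfold Rpower. assert (ln a < 0) by (apply ln_neg; auto).
  destruct (Rle_lt_or_eq_dec _ _ Hxy) as [Hl| ->]; [|lra].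
  left. apply exp_increasing. nra. Qed.

Lemma Rpower_lt1 a x : 0 < a < 1 -> 0 < x -> Rpower a x < 1.
Proof. intros Ha Hx. assert (ln a < 0) by (apply ln_neg; auto). unfold Rpower.
  rewrite <- exp_0. apply exp_increasing. nra. Qed.

Lemma Rpower_le1 a x : 0 < a < 1 -> 0 <= x -> Rpower a x <= 1.
Proof. intros Ha Hx. destruct (Rle_lt_or_eq_dec _ _ Hx) as [H| <-].
  - left; apply Rpower_lt1; auto.
  - rewrite Rpower_O; lra. Qed.

Lemma inv_exists (n : nat) (M : nat -> nat -> R) :
  (forall v : nat -> R, (forall i, (i < n)%nat -> sumR n (fun k => M i k * v k) = 0) ->
     forall i, (i < n)%nat -> v i = 0) ->
  exists F, is_inverse n M F.
Proof. exact (MC.inv_exists n M). Qed.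

Section Model.
Variable n : nat.
Variable E : nat -> nat -> Prop.
Variables P w : nat -> nat -> R.
Hypothesis HPnn : forall i j, (i < n)%nat -> (j < n)%nat -> 0 <= P i j.
Hypothesis HProw : forall i, (i < n)%nat -> sumR n (fun j => P i j) = 1.
Hypothesis HPE : forall i j, (i < n)%nat -> (j < n)%nat -> (0 < P i j <-> E i j).
Hypothesis HEV : forall i j, E i j -> (i < n)%nat /\ (j < n)%nat.
Hypothesis Hw : forall i j, E i j -> 0 < w i j.
Variable t : nat.
Hypothesis Ht : (t < n)%nat.
Variable Fl : nat -> bool.
Hypothesis HFt : Fl t = false.

Notation A := (Pev P w).
Notation T := (inT n t Fl).

Lemma inT_true m : T m = true <-> (m < n)%nat /\ m <> t /\ Fl m = false.
Proof. unfold inT. rewrite !Bool.andb_true_iff, Nat.ltb_lt, !Bool.negb_true_iff, Nat.eqb_neq.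
  tauto. Qed.

Lemma inT_t : T t = false.
Proof. unfold inT. rewrite Nat.eqb_refl. destruct (Nat.ltb t n); auto. Qed.

Lemma P_cases i j : (i < n)%nat -> (j < n)%nat -> P i j = 0 \/ E i j.
Proof. intros Hi Hj. destruct (HPnn i j Hi Hj) as [H|H]; [right; apply HPE; auto|left; auto]. Qed.

Lemma A_nonneg al i j : (i < n)%nat -> (j < n)%nat -> 0 <= A al i j.
Proof. intros. unfold Pev. pose proof (Rpower_pos al (w i j)). pose proof (HPnn i j H H0). nra. Qed.

Lemma A_zero al i j : P i j = 0 -> A al i j = 0.
Proof. intros H. unfold Pev. rewrite H. ring. Qed.

Lemma rowsum_lt1 al x : 0 < al < 1 -> (x < n)%nat -> sumR n (fun j => A al x j) < 1.
Proof. intros Ha Hx. rewrite <- (HProw x Hx). apply sumR_lt.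
  - intros k Hk. unfold Pev. pose proof (HPnn x k Hx Hk).
    destruct (P_cases x k Hx Hk) as [H0|HE]; [rewrite H0; lra|].
    pose proof (Rpower_lt1 al (w x k) Ha (Hw _ _ HE)). nra.
  - destruct (sumR_pos_exists n (fun j => P x j)) as [k [Hk Hp]]; auto.
    exists k; split; auto. unfold Pev. apply HPE in Hp as HE; auto.
    pose proof (Rpower_lt1 al (w x k) Ha (Hw _ _ HE)). 
    apply HPE in HE; auto. nra. Qed.

Lemma CP al v : 0 < al < 1 ->
  (forall x, T x = true -> sumR n (fun j => A al x j * v j) <= v x) ->
  (forall j, (j < n)%nat -> T j = false -> 0 <= v j) ->
  forall x, T x = true -> 0 <= v x.
Proof.
  intros Ha Hsup Hout x Hx. destruct (Rle_lt_dec 0 (v x)) as [|Hneg]; auto. exfalso.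
  destruct (argmin_fin n T v) as [m [Hm [HTm Hmin]]].
  { exists x; split; auto. apply inT_true in Hx; tauto. }
  assert (Hvm : v m < 0) by (assert (v m <= v x) by (apply Hmin; auto; apply inT_true in Hx; tauto); lra).
  assert (Hge : sumR n (fun j => A al m j * v m) <= sumR n (fun j => A al m j * v j)).
  { apply sumR_le. intros k Hk. pose proof (A_nonneg al m k Hm Hk).
    destruct (T k) eqn:HTk.
    - pose proof (Hmin k Hk HTk). nra.
    - pose proof (Hout k Hk HTk). nra. }
  pose proof (Hsup m HTm).
  rewrite (sumR_ext n _ (fun j => v m * A al m j)) in Hge by (intros; ring).
  rewrite sumR_scal in Hge. pose proof (rowsum_lt1 al m Ha Hm).
  assert (0 <= sumR n (fun j => A al m j)) by (apply sumR_nonneg; intros; apply A_nonneg; auto).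
  assert (0 < (- v m) * (1 - sumR n (fun j => A al m j))) by (apply Rmult_lt_0_compat; lra).
  change (sumR n (Pev P w al m)) with (sumR n (fun j => Pev P w al m j)) in Hge. nra.
Qed.

Lemma IminusPTT_inv al : 0 < al < 1 -> is_inverse n (IminusPTT n t Fl P w al) (Fmat n t Fl P w al).
Proof.
  intros Ha. unfold Fmat, inv_mat. apply epsilon_spec. apply inv_exists.
  intros v Hv.
  assert (Hout : forall i, (i < n)%nat -> T i = false -> v i = 0).
  { intros i Hi HTi. rewrite <- (Hv i Hi). unfold IminusPTT. rewrite HTi. simpl.
    rewrite (sumR_ext n _ (fun k => if Nat.eqb i k then v k else 0)).
    - rewrite sumR_delta; auto.
    - intros k Hk. destruct (Nat.eqb i k); ring. }
  assert (Hin : forall i, T i = true -> v i = sumR n (fun k => A al i k * v k)).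
  { intros i HTi. assert (Hi : (i < n)%nat) by (apply inT_true in HTi; tauto).
    pose proof (Hv i Hi) as H0. unfold IminusPTT in H0. rewrite HTi in H0. simpl in H0.
    rewrite (sumR_ext n _ (fun k => (if Nat.eqb i k then v k else 0) - A al i k * v k)) in H0.
    - rewrite sumR_minus, sumR_delta in H0; auto. lra.
    - intros k Hk. destruct (T k) eqn:HTk.
      + destruct (Nat.eqb i k); ring.
      + rewrite (Hout k Hk HTk). destruct (Nat.eqb i k); ring. }
  assert (Hpos : forall x, T x = true -> 0 <= v x).
  { apply (CP al v Ha); [intros; rewrite <- Hin; auto; lra| intros; rewrite Hout; auto; lra]. }
  assert (Hneg : forall x, T x = true -> 0 <= - v x).
  { apply (CP al (fun x => - v x) Ha).
    - intros x HTx. rewrite (Hin x HTx). rewrite (sumR_ext n _ (fun k => -1 * (A al x k * v k))) by (intros; ring).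
      rewrite sumR_scal. lra.
    - intros j Hj HTj. rewrite Hout; auto; lra. }
  intros i Hi. destruct (T i) eqn:HTi; [|auto].
  pose proof (Hpos i HTi); pose proof (Hneg i HTi). lra.
Qed.

Lemma solve_sys al b x : 0 < al < 1 -> T x = true ->
  sumR n (fun m => if T m then Fmat n t Fl P w al x m * b m else 0) =
  sumR n (fun j => if T j then A al x j *
       sumR n (fun m => if T m then Fmat n t Fl P w al j m * b m else 0) else 0) + b x.
Proof.
  intros Ha HTx. assert (Hx : (x < n)%nat) by (apply inT_true in HTx; tauto).
  pose proof (IminusPTT_inv al Ha) as Hinv.
  set (F := Fmat n t Fl P w al) in *.
  set (y := fun j => sumR n (fun m => if T m then F j m * b m else 0)).
  set (M := IminusPTT n t Fl P w al) in *.
  assert (H1 : sumR n (fun j => M x j * y j) = b x).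
  { unfold y. rewrite (sumR_ext n _ (fun j => sumR n (fun m => M x j * (if T m then F j m * b m else 0)))).
    2:{ intros; rewrite <- sumR_scal; auto. }
    rewrite sumR_swap.
    rewrite (sumR_ext n _ (fun m => if Nat.eqb x m then (if T m then b m else 0) else 0)).
    - rewrite sumR_delta; auto. rewrite HTx; auto.
    - intros m Hm. destruct (T m) eqn:HTm.
      + rewrite (sumR_ext n _ (fun j => b m * (M x j * F j m))) by (intros; ring).
        rewrite sumR_scal. destruct (Hinv x m Hx Hm) as [Hl _]. rewrite Hl.
        destruct (Nat.eqb x m); ring.
      + rewrite (sumR_ext n _ (fun _ => 0)) by (intros; ring). rewrite sumR_zero.
        destruct (Nat.eqb x m); auto. }
  assert (H2 : sumR n (fun j => M x j * y j) =
     y x - sumR n (fun j => if T j then A al x j * y j else 0)).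
  { rewrite <- (sumR_delta n x y Hx). rewrite <- sumR_minus. apply sumR_ext.
    intros j Hj. unfold M, IminusPTT. rewrite HTx. simpl. destruct (T j); destruct (Nat.eqb x j); ring. }
  unfold y in *. lra.
Qed.


Notation Q := (Qabs n t Fl P w).
Notation Fm := (Fmat n t Fl P w).

Lemma Q_t al : Q al t = 1.
Proof. unfold Qabs. rewrite Nat.eqb_refl. auto. Qed.

Lemma Q_in al j : T j = true -> Q al j = sumR n (fun m => if T m then Fm al j m * A al m t else 0).
Proof. intros H. unfold Qabs. assert (j <> t) by (apply inT_true in H; tauto).
  apply Nat.eqb_neq in H0. rewrite H0, H. auto. Qed.

Lemma Q_out al j : T j = false -> j <> t -> Q al j = 0.
Proof. intros H H0. unfold Qabs. apply Nat.eqb_neq in H0. rewrite H0, H. auto. Qed.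

Lemma split_sum (f : nat -> R) :
  (forall j, (j < n)%nat -> T j = false -> j <> t -> f j = 0) ->
  sumR n f = sumR n (fun j => if T j then f j else 0) + f t.
Proof. intros H. rewrite <- (sumR_delta n t f Ht). rewrite <- sumR_plus. apply sumR_ext.
  intros j Hj. destruct (Nat.eqb_spec t j) as [<-|Hne].
  - rewrite inT_t. ring.
  - destruct (T j) eqn:HT; [ring|]. rewrite H; auto. ring. Qed.

Lemma Q_eq al x : 0 < al < 1 -> T x = true -> Q al x = sumR n (fun j => A al x j * Q al j).
Proof. intros Ha HTx. rewrite (Q_in al x HTx). rewrite (solve_sys al (fun m => A al m t) x Ha HTx).
  rewrite (split_sum (fun j => A al x j * Q al j)).
  - rewrite Q_t. f_equal; [|ring]. apply sumR_ext. intros j Hj. destruct (T j) eqn:HT; auto.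
    rewrite Q_in; auto.
  - intros j Hj HT Hne. rewrite Q_out; auto. ring. Qed.

Lemma Q_nonneg al j : 0 < al < 1 -> 0 <= Q al j.
Proof. intros Ha. destruct (Nat.eq_dec j t) as [->|Hne]; [rewrite Q_t; lra|].
  destruct (T j) eqn:HT; [|rewrite Q_out; auto; lra].
  apply (CP al (Q al) Ha); auto.
  - intros x HTx. rewrite <- Q_eq; auto. lra.
  - intros k Hk HTk. destruct (Nat.eq_dec k t) as [->|]; [rewrite Q_t; lra|rewrite Q_out; auto; lra]. Qed.

Definition Sv al m := sumR n (fun i => A al m i * w m i * Q al i).
Definition Nv al x := sumR n (fun m => if T m then Fm al x m * Sv al m else 0).
Definition Ne al j := if T j then Nv al j else 0.

Lemma N_eq al x : 0 < al < 1 -> T x = true -> Nv al x = sumR n (fun j => A al x j * Ne al j) + Sv al x.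
Proof. intros Ha HTx. unfold Nv at 1. rewrite (solve_sys al (Sv al) x Ha HTx). f_equal.
  apply sumR_ext. intros j Hj. unfold Ne, Nv. destruct (T j); ring. Qed.

Lemma Q_zero_S al m : 0 < al < 1 -> T m = true -> Q al m = 0 -> Sv al m = 0.
Proof. intros Ha HTm HQ. assert (Hm : (m < n)%nat) by (apply inT_true in HTm; tauto).
  rewrite Q_eq in HQ; auto.
  assert (Hz := sumR_eq0 n _ (fun k Hk => Rmult_le_pos _ _ (A_nonneg al m k Hm Hk) (Q_nonneg al k Ha)) HQ).
  unfold Sv. rewrite (sumR_ext n _ (fun _ => 0)). apply sumR_zero.
  intros k Hk.
  replace (A al m k * w m k * Q al k) with (w m k * (A al m k * Q al k)) by ring.
  rewrite Hz; auto. ring. Qed.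

Lemma U_eq al s : 0 < al < 1 -> T s = true -> Q al s <> 0 ->
  Uavoid n t Fl P w al s = Nv al s / Q al s.
Proof. intros Ha HTs HQs. unfold Uavoid, Nv. unfold Rdiv at 2. rewrite Rmult_comm.
  rewrite <- sumR_scal. apply sumR_ext. intros m Hm. destruct (T m) eqn:HTm; [|ring].
  destruct (Req_EM_T (Q al m) 0) as [HQ|HQ].
  - rewrite Q_zero_S; auto. ring.
  - unfold rcost. fold (Sv al m). field. auto. Qed.

Lemma walk_nodes x p : walk_to E n Fl x p t -> forall y, In y p -> (y < n)%nat.
Proof. revert x; induction p as [|z q IH]; simpl; intros x Hw0 y Hy; [tauto|].
  destruct Hw0 as [_ [Hz [_ Hwq]]]. destruct Hy as [<-|Hy]; auto. eapply IH; eauto. Qed.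

Lemma walk_cost_nonneg x p : walk_to E n Fl x p t -> 0 <= path_cost w x p.
Proof. revert x; induction p as [|z q IH]; simpl; intros x Hw0; [lra|].
  destruct Hw0 as [HE [_ [_ Hwq]]]. pose proof (Hw _ _ HE). pose proof (IH z Hwq). lra. Qed.

Lemma walk_last x p : walk_to E n Fl x p t -> In t (x :: p).
Proof. revert x; induction p as [|z q IH]; simpl; intros x Hw0; [auto|].
  destruct Hw0 as [_ [_ [_ Hwq]]]. right. apply IH; auto. Qed.

Lemma walk_split a q1 x q2 : walk_to E n Fl a (q1 ++ x :: q2) t ->
  walk_to E n Fl x q2 t /\ path_cost w x q2 <= path_cost w a (q1 ++ x :: q2).
Proof. revert a; induction q1 as [|z q IH]; simpl; intros a Hw0.
  - destruct Hw0 as [HE [_ [_ Hwq]]]. split; auto. pose proof (Hw _ _ HE). lra.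
  - destruct Hw0 as [HE [_ [_ Hwq]]]. destruct (IH z Hwq) as [H1 H2]. split; auto.
    pose proof (Hw _ _ HE). lra. Qed.

Fixpoint allL (k : nat) : list (list nat) :=
  match k with
  | O => [[]]
  | S k' => [] :: flat_map (fun x => map (cons x) (allL k')) (seq 0 n)
  end.

Lemma allL_in k l : (length l <= k)%nat -> (forall y, In y l -> (y < n)%nat) -> In l (allL k).
Proof. revert l; induction k as [|k IH]; intros l Hl Hy.
  - destruct l; simpl in *; [auto|lia].
  - destruct l as [|y l]; simpl; [auto|]. right. apply in_flat_map. exists y. split.
    + apply in_seq. assert (y < n)%nat by (apply Hy; simpl; auto). lia.
    + apply in_map. apply IH. simpl in Hl; lia. intros z Hz; apply Hy; simpl; auto. Qed.

Lemma min_list (C : list (list nat)) (Pr : list nat -> Prop) (c : list nat -> R) :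
  (exists p, In p C /\ Pr p) -> exists p, In p C /\ Pr p /\ forall q, In q C -> Pr q -> c p <= c q.
Proof. induction C as [|a C IH]; intros [p [Hp Hpr]]; [destruct Hp|].
  destruct (classic (exists p, In p C /\ Pr p)) as [Hex|Hno].
  - destruct (IH Hex) as [m [Hm [Hpm Hmin]]].
    destruct (classic (Pr a /\ c a < c m)) as [[Ha Hlt]|Hn].
    + exists a; repeat split; simpl; auto. intros q [<-|Hq] Hpq; [lra|]. pose proof (Hmin q Hq Hpq). lra.
    + exists m; repeat split; simpl; auto. intros q Hq Hpq.
      destruct (Rle_dec (c m) (c q)) as [|Hlt]; auto. destruct Hq as [<-|Hq].
      * exfalso; apply Hn; split; auto; lra.
      * pose proof (Hmin q Hq Hpq); lra.
  - destruct Hp as [<-|Hp]; [|exfalso; apply Hno; eauto].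
    exists a; repeat split; simpl; auto. intros q [<-|Hq] Hpq; [lra|]. exfalso; apply Hno; eauto. Qed.

Lemma min_exists x : (exists p, avoid_path E n Fl x p t) -> exists L, is_min_path_cost E n Fl w x t L.
Proof. intros Hex.
  assert (Hin : forall p, avoid_path E n Fl x p t -> In p (allL n)).
  { intros p [Hnd Hwk]. apply allL_in.
    - apply NoDup_cons_iff in Hnd. destruct Hnd as [_ Hnd].
      rewrite <- (length_seq n 0). apply NoDup_incl_length; auto.
      intros y Hy. apply in_seq. pose proof (walk_nodes x p Hwk y Hy). lia.
    - apply walk_nodes with x; auto. }
  destruct (min_list (allL n) (fun p => avoid_path E n Fl x p t) (path_cost w x)) as [p [_ [Hp Hmin]]].
  { destruct Hex as [p Hp]. exists p; auto. }
  exists (path_cost w x p). split; [exists p; auto|]. intros q Hq. apply Hmin; auto. Qed.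

Definition dmin x := epsilon (inhabits 0) (fun L => is_min_path_cost E n Fl w x t L).
Definition reach x := Fl x = false /\ exists p, avoid_path E n Fl x p t.
Definition dist0 x := if excluded_middle_informative (reach x) then dmin x else 0.
Definition Mbig := 1 + sumR n dist0.
Definition dist x := if excluded_middle_informative (reach x) then dmin x else Mbig.

Lemma dmin_spec x : (exists p, avoid_path E n Fl x p t) -> is_min_path_cost E n Fl w x t (dmin x).
Proof. intros H. unfold dmin. apply epsilon_spec. apply min_exists; auto. Qed.

Lemma dmin_nonneg x : reach x -> 0 <= dmin x.
Proof. intros [_ Hr]. destruct (dmin_spec x Hr) as [[p [[_ Hwk] <-]] _]. eapply walk_cost_nonneg; eauto. Qed.

Lemma dist0_nonneg x : 0 <= dist0 x.
Proof. unfold dist0. destruct (excluded_middle_informative (reach x)); [apply dmin_nonneg; auto|lra]. Qed.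

Lemma Mbig_pos : 1 <= Mbig.
Proof. unfold Mbig. pose proof (sumR_nonneg n dist0 (fun k _ => dist0_nonneg k)). lra. Qed.

Lemma dist_nonneg x : 0 <= dist x.
Proof. unfold dist. destruct (excluded_middle_informative (reach x)); [apply dmin_nonneg; auto|pose proof Mbig_pos; lra]. Qed.

Lemma dist_le_M x : (x < n)%nat -> dist x <= Mbig.
Proof. intros Hx. unfold dist. destruct (excluded_middle_informative (reach x)) as [Hr|]; [|lra].
  assert (dist0 x <= sumR n dist0) by (apply sumR_ge_term; auto; intros; apply dist0_nonneg).
  assert (dist0 x = dmin x) by (unfold dist0; destruct (excluded_middle_informative (reach x)); tauto).
  unfold Mbig. lra. Qed.

Lemma reach_t : reach t.
Proof. split; auto. exists []. split; [constructor; [simpl; auto|constructor]|simpl; auto]. Qed.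

Lemma dist_t : dist t = 0.
Proof. unfold dist. destruct (excluded_middle_informative (reach t)) as [Hr|Hn]; [|exfalso; apply Hn, reach_t].
  pose proof (dmin_nonneg t Hr). destruct (dmin_spec t (proj2 Hr)) as [_ Hmin].
  assert (dmin t <= path_cost w t []) by (apply Hmin; split; [constructor; [simpl; auto|constructor]|simpl; auto]).
  simpl in H0. lra. Qed.

Lemma shortcut x j q : E x j -> Fl j = false -> avoid_path E n Fl j q t ->
  exists p, avoid_path E n Fl x p t /\ path_cost w x p <= w x j + path_cost w j q.
Proof. intros HE HFj [Hnd Hwk]. pose proof (Hw _ _ HE) as Hwp.
  destruct (classic (In x (j :: q))) as [Hin|Hnin].
  - destruct Hin as [<-|Hin].
    + exists q. split; [split; auto|lra].
    + destruct (in_split _ _ Hin) as [q1 [q2 ->]]. destruct (walk_split j q1 x q2 Hwk) as [H1 H2].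
      exists q2. split; [split; auto|lra].
      apply NoDup_cons_iff in Hnd. destruct Hnd as [_ Hnd]. eapply NoDup_app_remove_l; eauto.
  - exists (j :: q). split; [split|simpl; lra].
    + constructor; auto.
    + simpl. destruct (HEV _ _ HE). auto. Qed.

Lemma triangle x j : T x = true -> E x j -> dist x <= w x j + dist j.
Proof. intros HTx HE. pose proof (Hw _ _ HE) as Hwp. apply inT_true in HTx as [Hx [Hxt HFx]].
  destruct (HEV _ _ HE) as [_ Hj].
  unfold dist at 2. destruct (excluded_middle_informative (reach j)) as [Hr|Hn].
  - destruct Hr as [HFj Hr]. destruct (dmin_spec j Hr) as [[q [Hq Hcq]] _].
    destruct (shortcut x j q HE HFj Hq) as [p [Hp Hcp]].
    assert (Hrx : reach x) by (split; eauto).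
    unfold dist. destruct (excluded_middle_informative (reach x)) as [_|]; [|tauto].
    destruct (dmin_spec x (proj2 Hrx)) as [_ Hmin]. pose proof (Hmin p Hp). lra.
  - pose proof (dist_le_M x Hx). lra. Qed.

Fixpoint prodP (x : nat) (p : list nat) : R :=
  match p with [] => 1 | y :: q => P x y * prodP y q end.

Lemma prodP_pos x p : walk_to E n Fl x p t -> 0 < prodP x p.
Proof. revert x; induction p as [|z q IH]; simpl; intros x Hw0; [lra|].
  destruct Hw0 as [HE [_ [_ Hwq]]]. destruct (HEV _ _ HE). apply HPE in HE; auto.
  pose proof (IH z Hwq). nra. Qed.

Lemma Q_path al p : 0 < al < 1 -> forall x, NoDup (x :: p) -> walk_to E n Fl x p t ->
  (x < n)%nat -> Fl x = false -> prodP x p * Rpower al (path_cost w x p) <= Q al x.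
Proof. intros Ha. induction p as [|y q IH]; simpl; intros x Hnd Hwk Hx HFx.
  - subst x. rewrite Q_t, Rpower_O; lra.
  - destruct Hwk as [HE [Hy [HFy Hwq]]].
    assert (Hxt : x <> t).
    { intros ->. apply NoDup_cons_iff in Hnd. destruct Hnd as [Hni _]. apply Hni. apply walk_last; auto. }
    assert (HTx : T x = true) by (apply inT_true; auto).
    apply NoDup_cons_iff in Hnd as Hnd'. destruct Hnd' as [_ Hnd'].
    pose proof (IH y Hnd' Hwq Hy HFy) as IHy.
    rewrite (Q_eq al x Ha HTx).
    assert (Hterm : A al x y * Q al y <= sumR n (fun j => A al x j * Q al j)).
    { apply (sumR_ge_term n (fun j => A al x j * Q al j)); auto.
      intros k Hk. apply Rmult_le_pos; [apply A_nonneg; auto|apply Q_nonneg; auto]. }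
    assert (HA : 0 <= A al x y) by (apply A_nonneg; auto).
    assert (A al x y * (prodP y q * Rpower al (path_cost w y q)) <= A al x y * Q al y)
      by (apply Rmult_le_compat_l; auto).
    unfold Pev in *. rewrite Rpower_plus.
    replace (P x y * prodP y q * (Rpower al (w x y) * Rpower al (path_cost w y q)))
      with (P x y * Rpower al (w x y) * (prodP y q * Rpower al (path_cost w y q))) by ring.
    lra. Qed.

Lemma Q_upper al x : 0 < al < 1 -> T x = true -> Q al x <= Rpower al (dist x).
Proof. intros Ha HTx.
  assert (H := CP al (fun j => Rpower al (dist j) - Q al j) Ha).
  cut (0 <= Rpower al (dist x) - Q al x); [lra|]. apply H; auto.
  - intros y HTy. assert (Hy : (y < n)%nat) by (apply inT_true in HTy; tauto).
    rewrite (sumR_ext n _ (fun j => A al y j * Rpower al (dist j) - A al y j * Q al j)) by (intros; ring).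
    rewrite sumR_minus. rewrite <- Q_eq; auto.
    assert (sumR n (fun j => A al y j * Rpower al (dist j)) <= sumR n (fun j => Rpower al (dist y) * P y j)).
    { apply sumR_le. intros j Hj. destruct (P_cases y j Hy Hj) as [H0|HE].
      - rewrite A_zero, H0; auto. lra.
      - unfold Pev. rewrite Rmult_assoc, <- Rpower_plus.
        pose proof (Rpower_le_exp al (dist y) (w y j + dist j) Ha (triangle y j HTy HE)).
        pose proof (HPnn y j Hy Hj). nra. }
    rewrite sumR_scal, HProw in H0; auto. lra.
  - intros j Hj HTj. destruct (Nat.eq_dec j t) as [->|Hne].
    + rewrite dist_t, Q_t, Rpower_O; lra.
    + rewrite Q_out; auto. pose proof (Rpower_pos al (dist j)). lra. Qed.

Lemma Q_upper_all al j : 0 < al < 1 -> Q al j <= Rpower al (dist j).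
Proof. intros Ha. destruct (Nat.eq_dec j t) as [->|Hne].
  - rewrite dist_t, Q_t, Rpower_O; lra.
  - destruct (T j) eqn:HT; [apply Q_upper; auto|]. rewrite Q_out; auto. pose proof (Rpower_pos al (dist j)). lra. Qed.

Definition De al j := Ne al j - dist j * Q al j.
Definition src al x := sumR n (fun j => A al x j * (w x j + dist j - dist x) * Q al j).

Lemma De_out al j : (j < n)%nat -> T j = false -> De al j = 0.
Proof. intros Hj HTj. unfold De, Ne. rewrite HTj. destruct (Nat.eq_dec j t) as [->|Hne].
  - rewrite dist_t. ring.
  - rewrite Q_out; auto. ring. Qed.

Lemma De_eq al x : 0 < al < 1 -> T x = true ->
  De al x = sumR n (fun j => A al x j * De al j) + src al x.
Proof. intros Ha HTx.
  assert (e1 : sumR n (fun j => A al x j * De al j) =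
     sumR n (fun j => A al x j * Ne al j) - sumR n (fun j => A al x j * dist j * Q al j)).
  { rewrite <- sumR_minus. apply sumR_ext. intros; unfold De; ring. }
  assert (e2 : src al x = Sv al x + sumR n (fun j => A al x j * dist j * Q al j)
                - dist x * sumR n (fun j => A al x j * Q al j)).
  { unfold src, Sv. rewrite <- sumR_scal, <- sumR_plus, <- sumR_minus. apply sumR_ext. intros; ring. }
  rewrite e1, e2. unfold De at 1. unfold Ne at 1. rewrite HTx.
  rewrite (N_eq al x Ha HTx). rewrite (Q_eq al x Ha HTx) at 1. ring. Qed.

Lemma src_nonneg al x : 0 < al < 1 -> T x = true -> 0 <= src al x.
Proof. intros Ha HTx. assert (Hx : (x < n)%nat) by (apply inT_true in HTx; tauto).
  apply sumR_nonneg. intros j Hj. destruct (P_cases x j Hx Hj) as [H0|HE].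
  - rewrite A_zero; auto. lra.
  - pose proof (triangle x j HTx HE). pose proof (A_nonneg al x j Hx Hj). pose proof (Q_nonneg al j Ha).
    apply Rmult_le_pos; [apply Rmult_le_pos|]; lra. Qed.

Lemma De_lower al x : 0 < al < 1 -> T x = true -> 0 <= De al x.
Proof. intros Ha HTx. apply (CP al (De al) Ha); auto.
  - intros y HTy. pose proof (De_eq al y Ha HTy). pose proof (src_nonneg al y Ha HTy). lra.
  - intros j Hj HTj. rewrite De_out; auto; lra. Qed.

Definition tau al x j := P x j * (w x j + dist j - dist x) * Rpower al (w x j + dist j - dist x).
Definition kappa al := sumR n (fun x => if T x then sumR n (fun j => tau al x j) else 0).

Lemma tau_nonneg al x j : T x = true -> (j < n)%nat -> 0 <= tau al x j.
Proof. intros HTx Hj. assert (Hx : (x < n)%nat) by (apply inT_true in HTx; tauto). unfold tau.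
  destruct (P_cases x j Hx Hj) as [H0|HE]; [rewrite H0; lra|].
  pose proof (triangle x j HTx HE). pose proof (HPnn x j Hx Hj).
  pose proof (Rpower_pos al (w x j + dist j - dist x)).
  apply Rmult_le_pos; [apply Rmult_le_pos|]; lra. Qed.

Lemma kappa_nonneg al : 0 <= kappa al.
Proof. apply sumR_nonneg. intros x Hx. destruct (T x) eqn:HT; [|lra].
  apply sumR_nonneg. intros; apply tau_nonneg; auto. Qed.

Lemma src_upper al x : 0 < al < 1 -> T x = true -> src al x <= kappa al * Rpower al (dist x).
Proof. intros Ha HTx. assert (Hx : (x < n)%nat) by (apply inT_true in HTx; tauto).
  apply Rle_trans with (sumR n (fun j => Rpower al (dist x) * tau al x j)).
  - apply sumR_le. intros j Hj. destruct (P_cases x j Hx Hj) as [H0|HE].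
    + rewrite A_zero; auto. unfold tau. rewrite H0. lra.
    + pose proof (triangle x j HTx HE). pose proof (Q_upper_all al j Ha). pose proof (Q_nonneg al j Ha).
      pose proof (HPnn x j Hx Hj).
      unfold tau, Pev.
      set (e := w x j + dist j - dist x).
      assert (He : 0 <= e) by (unfold e; lra).
      assert (Hpw : Rpower al (w x j) * Rpower al (dist j) = Rpower al (dist x) * Rpower al e).
      { rewrite <- !Rpower_plus. f_equal. unfold e; ring. }
      assert (P x j * Rpower al (w x j) * e * Q al j <= P x j * Rpower al (w x j) * e * Rpower al (dist j)).
      { apply Rmult_le_compat_l; auto. pose proof (Rpower_pos al (w x j)). apply Rmult_le_pos; [|lra]. nra. }
      replace (P x j * Rpower al (w x j) * e * Rpower al (dist j)) with
        (P x j * e * (Rpower al (w x j) * Rpower al (dist j))) in H3 by ring.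
      rewrite Hpw in H3. lra.
  - rewrite sumR_scal. rewrite Rmult_comm. apply Rmult_le_compat_r; [left; apply Rpower_pos|].
    unfold kappa. 
    assert (Hg := sumR_ge_term n (fun x => if T x then sumR n (fun j => tau al x j) else 0) x).
    simpl in Hg. rewrite HTx in Hg. apply Hg; auto.
    intros k Hk. destruct (T k) eqn:HT; [|lra]. apply sumR_nonneg. intros; apply tau_nonneg; auto. Qed.

Definition Hh j := sumR n (fun m => if T m then Fm (1/2) j m * 1 else 0).
Definition He j := if T j then Hh j else 0.

Lemma half_in : 0 < 1/2 < 1.
Proof. lra. Qed.

Lemma He_eq x : T x = true -> He x = sumR n (fun j => A (1/2) x j * He j) + 1.
Proof. intros HTx. unfold He at 1. rewrite HTx. unfold Hh at 1.
  rewrite (solve_sys (1/2) (fun _ => 1) x half_in HTx). f_equal.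
  apply sumR_ext. intros j Hj. unfold He, Hh. destruct (T j); ring. Qed.

Lemma He_nonneg j : 0 <= He j.
Proof. destruct (T j) eqn:HT; [|unfold He; rewrite HT; lra].
  apply (CP (1/2) He half_in); auto.
  - intros x HTx. pose proof (He_eq x HTx). lra.
  - intros k Hk HTk. unfold He. rewrite HTk. lra. Qed.

Lemma key_pow al a b c : 0 < al < 1/2 -> b <= a + c ->
  Rpower al a * Rpower (2 * al) c <= Rpower (1/2) a * Rpower (2 * al) b.
Proof. intros Ha Hb.
  replace (Rpower al a) with (Rpower (1/2) a * Rpower (2 * al) a).
  2:{ rewrite Rpower_mult_distr; [f_equal; field|lra|lra]. }
  rewrite Rmult_assoc, <- Rpower_plus.
  apply Rmult_le_compat_l; [left; apply Rpower_pos|]. apply Rpower_le_exp; [lra|lra]. Qed.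

Lemma De_upper al x : 0 < al < 1/2 -> T x = true ->
  De al x <= kappa al * Rpower (2 * al) (dist x) * He x.
Proof. intros Ha HTx. assert (Ha1 : 0 < al < 1) by lra.
  cut (0 <= kappa al * Rpower (2 * al) (dist x) * He x - De al x); [lra|].
  apply (CP al (fun j => kappa al * Rpower (2 * al) (dist j) * He j - De al j) Ha1); auto.
  - intros y HTy. assert (Hy : (y < n)%nat) by (apply inT_true in HTy; tauto).
    rewrite (sumR_ext n _ (fun j => kappa al * (A al y j * Rpower (2 * al) (dist j) * He j) - A al y j * De al j))
      by (intros; ring).
    rewrite sumR_minus, sumR_scal.
    pose proof (De_eq al y Ha1 HTy) as HD.
    pose proof (src_upper al y Ha1 HTy) as Hs.
    pose proof (He_eq y HTy) as HH.
    assert (B1 : sumR n (fun j => A al y j * Rpower (2 * al) (dist j) * He j) <=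
                 Rpower (2 * al) (dist y) * sumR n (fun j => A (1/2) y j * He j)).
    { rewrite <- sumR_scal. apply sumR_le. intros j Hj. pose proof (He_nonneg j).
      destruct (P_cases y j Hy Hj) as [H0|HE].
      - rewrite !A_zero; auto. lra.
      - unfold Pev. pose proof (HPnn y j Hy Hj).
        pose proof (key_pow al (w y j) (dist y) (dist j) Ha (triangle y j HTy HE)).
        assert (0 <= P y j * He j) by (apply Rmult_le_pos; auto).
        nra. }
    assert (B2 : Rpower al (dist y) <= Rpower (2 * al) (dist y)).
    { apply Rle_Rpower_l; [apply dist_nonneg|lra]. }
    pose proof (kappa_nonneg al) as Hk.
    assert (kappa al * sumR n (fun j => A al y j * Rpower (2 * al) (dist j) * He j) <=
            kappa al * (Rpower (2 * al) (dist y) * sumR n (fun j => A (1/2) y j * He j)))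
      by (apply Rmult_le_compat_l; auto).
    assert (kappa al * Rpower al (dist y) <= kappa al * Rpower (2 * al) (dist y))
      by (apply Rmult_le_compat_l; auto).
    rewrite HH. lra.
  - intros j Hj HTj. rewrite De_out; auto. unfold He. rewrite HTj. lra. Qed.

Lemma div_nonneg a b : 0 <= a -> 0 < b -> 0 <= a / b.
Proof. intros. unfold Rdiv. apply Rmult_le_pos; auto. left; apply Rinv_0_lt_compat; auto. Qed.

Lemma lim_sum (f : nat -> R -> R) m :
  (forall k, (k < m)%nat -> forall eps, 0 < eps -> exists del, 0 < del /\
     forall al, 0 < al < del -> Rabs (f k al) < eps) ->
  forall eps, 0 < eps -> exists del, 0 < del /\
     forall al, 0 < al < del -> Rabs (sumR m (fun k => f k al)) < eps.
Proof. induction m as [|m IH]; intros Hf eps Heps.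
  - exists 1. split; [lra|]. intros al _. simpl. rewrite Rabs_R0. auto.
  - destruct (IH (fun k Hk => Hf k ltac:(lia)) (eps/2) ltac:(lra)) as [d1 [Hd1 H1]].
    destruct (Hf m ltac:(lia) (eps/2) ltac:(lra)) as [d2 [Hd2 H2]].
    exists (Rmin d1 d2). split; [apply Rmin_pos; auto|]. intros al [Ha Had].
    simpl. pose proof (Rmin_l d1 d2). pose proof (Rmin_r d1 d2).
    pose proof (H1 al ltac:(lra)). pose proof (H2 al ltac:(lra)).
    pose proof (Rabs_triang (sumR m (fun k => f k al)) (f m al)). lra. Qed.

Lemma tau_lim x j : T x = true -> (j < n)%nat -> forall eps, 0 < eps -> exists del, 0 < del /\
     forall al, 0 < al < del -> Rabs (tau al x j) < eps.
Proof. intros HTx Hj eps Heps. assert (Hx : (x < n)%nat) by (apply inT_true in HTx; tauto).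
  unfold tau. set (e := w x j + dist j - dist x).
  destruct (P_cases x j Hx Hj) as [H0|HE].
  - exists 1. split; [lra|]. intros. rewrite H0. rewrite !Rmult_0_l, Rabs_R0. auto.
  - assert (He0 : 0 <= e) by (unfold e; pose proof (triangle x j HTx HE); lra).
    destruct (Rle_lt_or_eq_dec _ _ He0) as [Hep| <-].
    + set (c := P x j * e). assert (Hc : 0 <= c) by (unfold c; pose proof (HPnn x j Hx Hj); nra).
      set (y := eps / (c + 1)). assert (Hy : 0 < y) by (unfold y; apply Rdiv_lt_0_compat; lra).
      exists (Rpower y (/ e)). split; [apply Rpower_pos|].
      intros al [Ha Had].
      assert (Hlt : Rpower al e < Rpower (Rpower y (/ e)) e) by (apply Rlt_Rpower_l; lra).
      rewrite Rpower_mult, Rinv_l, Rpower_1 in Hlt; [|auto|lra].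
      pose proof (Rpower_pos al e).
      rewrite Rabs_right by (apply Rle_ge; apply Rmult_le_pos; [exact Hc|lra]).
      fold c. assert (c * Rpower al e <= c * y) by (apply Rmult_le_compat_l; lra).
      assert (c * y < eps).
      { unfold y. apply Rmult_lt_reg_r with (c + 1); [lra|].
        field_simplify; [|lra]. nra. }
      lra.
    + exists 1. split; [lra|]. intros. rewrite Rmult_0_r, Rmult_0_l, Rabs_R0. auto. Qed.

Lemma kappa_lim eps : 0 < eps -> exists del, 0 < del /\ forall al, 0 < al < del -> kappa al < eps.
Proof. intros Heps.
  destruct (lim_sum (fun x al => if T x then sumR n (fun j => tau al x j) else 0) n) with (eps := eps)
    as [d [Hd H]]; auto.
  - intros x Hx e He. destruct (T x) eqn:HT.
    + apply (lim_sum (fun j al => tau al x j) n); auto. intros; apply tau_lim; auto.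
    + exists 1. split; [lra|]. intros. rewrite Rabs_R0. auto.
  - exists d. split; auto. intros al Ha. pose proof (H al Ha). unfold kappa.
    pose proof (Rle_abs (sumR n (fun x => if T x then sumR n (fun j => tau al x j) else 0))). lra. Qed.

Lemma main_in s : (s < n)%nat -> Fl s = false -> s <> t ->
  (exists p, avoid_path E n Fl s p t) ->
  exists L, is_min_path_cost E n Fl w s t L /\
    limit1_in (fun al => Uavoid n t Fl P w al s) (fun al => 0 < al < 1) L 0.
Proof.
  intros Hs HsF Hst Hreach.
  assert (HTs : T s = true) by (apply inT_true; auto).
  assert (Hr : reach s) by (split; auto).
  assert (HdL : dist s = dmin s) by (unfold dist; destruct (excluded_middle_informative (reach s)); tauto).
  pose proof (dmin_spec s Hreach) as Hspec.
  exists (dmin s). split; auto.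
  destruct Hspec as [[p0 [Hp0 Hc0]] _].
  set (L := dmin s) in *.
  set (pi := prodP s p0).
  assert (Hpi : 0 < pi) by (apply prodP_pos; apply Hp0).
  set (K := Rpower 2 L * He s + 1).
  assert (HK : 0 < K) by (unfold K; pose proof (Rpower_pos 2 L); pose proof (He_nonneg s); nra).
  unfold limit1_in, limit_in. intros eps Heps.
  destruct (kappa_lim (eps * pi / K)) as [d1 [Hd1 Hk]].
  { apply Rdiv_lt_0_compat; [apply Rmult_lt_0_compat|]; auto. }
  exists (Rmin d1 (1/2)). split; [apply Rmin_pos; lra|].
  intros al [[Ha0 Ha1] Hd]. simpl in Hd. unfold R_dist in Hd. rewrite Rminus_0_r, Rabs_right in Hd by lra.
  pose proof (Rmin_l d1 (1/2)). pose proof (Rmin_r d1 (1/2)).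
  assert (Ha : 0 < al < 1) by lra. assert (Ha2 : 0 < al < 1/2) by lra.
  simpl. unfold R_dist.
  assert (HQl : pi * Rpower al L <= Q al s).
  { rewrite <- Hc0. apply Q_path; auto; apply Hp0. }
  pose proof (Rpower_pos al L) as HaL.
  assert (HQ : 0 < Q al s) by nra.
  rewrite U_eq; auto; [|lra].
  assert (HNe : Nv al s = De al s + L * Q al s) by (unfold De, Ne; rewrite HTs, HdL; ring).
  rewrite HNe.
  replace ((De al s + L * Q al s) / Q al s - L) with (De al s / Q al s) by (field; lra).
  pose proof (De_lower al s Ha HTs) as Hlo.
  pose proof (De_upper al s Ha2 HTs) as Hup. rewrite HdL in Hup. fold L in Hup.
  rewrite <- Rpower_mult_distr in Hup by lra.
  pose proof (Hk al ltac:(lra)) as Hkap.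
  pose proof (kappa_nonneg al) as Hk0.
  pose proof (He_nonneg s) as Hh0.
  pose proof (Rpower_pos 2 L) as H2L.
  rewrite Rabs_right by (apply Rle_ge; apply div_nonneg; lra).
  apply Rle_lt_trans with (kappa al * K / pi).
  - apply Rmult_le_reg_r with (Q al s); auto. unfold Rdiv at 1. rewrite Rmult_assoc, Rinv_l, Rmult_1_r by lra.
    apply Rle_trans with (kappa al * (Rpower 2 L * Rpower al L) * He s); auto.
    assert (kappa al * K / pi * Q al s >= kappa al * K / pi * (pi * Rpower al L)).
    { apply Rle_ge, Rmult_le_compat_l; auto. apply div_nonneg; [|lra]. apply Rmult_le_pos; lra. }
    replace (kappa al * K / pi * (pi * Rpower al L)) with (kappa al * K * Rpower al L) in H1 by (field; lra).
    unfold K in *.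
    replace (kappa al * (Rpower 2 L * He s + 1) * Rpower al L) with
      (kappa al * (Rpower 2 L * Rpower al L) * He s + kappa al * Rpower al L) in H1 by ring.
    assert (0 <= kappa al * Rpower al L) by (apply Rmult_le_pos; lra). lra.
  - apply Rmult_lt_reg_r with (pi / K); [apply Rdiv_lt_0_compat; lra|].
    replace (kappa al * K / pi * (pi / K)) with (kappa al) by (field; lra).
    replace (eps * (pi / K)) with (eps * pi / K) by (field; lra). auto.
Qed.

End Model.

Theorem mainTheorem9
  (n : nat) (E : nat -> nat -> Prop) (P w : nat -> nat -> R)
  (HPnn : forall i j, (i < n)%nat -> (j < n)%nat -> 0 <= P i j)
  (HProw : forall i, (i < n)%nat -> sumR n (fun j => P i j) = 1)
  (HPE : forall i j, (i < n)%nat -> (j < n)%nat -> (0 < P i j <-> E i j))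
  (HEV : forall i j, E i j -> (i < n)%nat /\ (j < n)%nat)
  (Hw : forall i j, E i j -> 0 < w i j)
  (t : nat) (Ht : (t < n)%nat)
  (Fl : nat -> bool) (HFt : Fl t = false)
  (s : nat) (Hs : (s < n)%nat) (HsF : Fl s = false) (Hst : s <> t)
  (Hreach : exists p, avoid_path E n Fl s p t) :
  exists L, is_min_path_cost E n Fl w s t L /\
    limit1_in (fun alpha => Uavoid n t Fl P w alpha s)
              (fun alpha => 0 < alpha < 1) L 0.
Proof.
  exact (main_in n E P w HPnn HProw HPE HEV Hw t Ht Fl HFt s Hs HsF Hst Hreach).
Qed.
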